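(* Let $G$ be a finite connected graph with node set $V$ and let $r$ be a ranking of $V$. Algorithm 1 (described in the context) run on $G$ and $r$ terminates and outputs a value, a node $c$ and a set $L$ such that the value equals $\operatorname{rad}(G)$, $e(c)=\operatorname{rad}(G)$ (i.e. $c$ is a center), and $L$ is a radius certificate with $L\subseteq A_r(V)$. It performs at most $2|L|+1$ one-to-all distance queries; in particular $O(|A_r(V)|)$ queries.
   Context: $G$ is undirected, unweighted, connected with finite node set $V$; $d$ is the shortest-path distance, $e(u)=\max_v d(u,v)$, $\operatorname{rad}(G)=\min_u e(u)$. A ranking $r$ is an injective map from $V$ to a totally ordered set; the antipode $A_r(u)$ is the node $v$ maximizing $(d(u,v),r(v))$ lexicographically, and $A_r(W)=\{A_r(u):u\in W\}$. A one-to-all distance query from $x$ computes $(d(x,v))_{v\in V}$. For $L\subseteq V$ let $e_L(v)=\max_{x\in L}d(v,x)$ ($=0$ if $L=\emptyset$). A radius certificate is a set $L$ with $e_L(v)\ge\operatorname{rad}(G)$ for all $v\in V$. Algorithm 1: start with $L=K=\emptyset$. Repeat iterations: (1) select $u\in V$ with $e_L(u)$ minimal (ties arbitrary); (2) query from $u$ and compute $e(u)$; (3) if $e(u)=e_L(u)$, halt and output $e(u)$, $u$, $L$; (4) otherwise let $a=A_r(u)$, query from $a$, add $u$ to $K$ and $a$ to $L$ and update $e_L$. After each iteration not halting in (3), if $\min_{v\in V}e_L(v)\ge\min_{w\in K}e(w)$, halt and output $e(c)$, $c$, $L$ where $c\in K$ minimizes $e$ over $K$; otherwise start a new iteration. 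*)

(* Defs.v *)
From mathcomp Require Import all_boot all_order.
Set Implicit Arguments. Unset Strict Implicit. Unset Printing Implicit Defensive.
Import Order.TTheory.

Section Graph.
Variables (T : finType) (e : rel T).

Fixpoint ball (u : T) (n : nat) : {set T} :=
  if n is n'.+1 then ball u n' :|: [set y | [exists x in ball u n', e x y]]
  else [set u].

(* shortest-path distance: least n with v within n steps of u
   (for a connected graph this is always < #|T|) *)
Definition dist (u v : T) : nat := find (fun n => v \in ball u n) (iota 0 #|T|).

Definition ecc (u : T) : nat := \max_(v : T) dist u v.

(* minimum of f over the x satisfying P; the neutral element #|T| is an
   upper bound of every distance/eccentricity in a connected graph, so on a
   nonempty range this is the genuine minimum *)
Definition minover (P : pred T) (f : T -> nat) : nat :=
  \big[minn/#|T|]_(x | P x) f x.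

Definition rad : nat := minover predT ecc.

Definition eL (L : {set T}) (v : T) : nat := \max_(x in L) dist v x.

Definition radius_certificate (L : {set T}) : Prop := forall v, rad <= eL L v.

Variables (disp : Order.disp_t) (R : orderType disp) (r : T -> R).

Definition is_antipode (u a : T) : bool :=
  [forall v, (dist u v < dist u a) || ((dist u v == dist u a) && (r v <= r a)%O)].

(* A_r(u) (unique when r is injective; default u never used) *)
Definition antipode (u : T) : T := odflt u [pick a | is_antipode u a].

Definition antipodes_all : {set T} := [set antipode u | u in T].

(* Algorithm 1 as a (nondeterministic in the tie-breaking) transition system.
   Running L K q : between iterations, q = number of distance queries so far.
   Halted val c L q : output (val, c, L) after q queries. *)
Inductive config :=
| Running of {set T} & {set T} & nat
| Halted of nat & T & {set T} & nat.

Inductive step : config -> config -> Prop :=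
| step_halt3 L K q u :
    (forall v, eL L u <= eL L v) ->
    ecc u = eL L u ->                         (* (2),(3): one query *)
    step (Running L K q) (Halted (ecc u) u L q.+1)
| step_continue L K q u :
    (forall v, eL L u <= eL L v) ->
    ecc u <> eL L u ->
    (* (4): one more query; L' = a |: L, K' = u |: K; check fails *)
    ~ (minover (mem (u |: K)) ecc <= minover predT (eL (antipode u |: L))) ->
    step (Running L K q) (Running (antipode u |: L) (u |: K) q.+2)
| step_halt_check L K q u c :
    (forall v, eL L u <= eL L v) ->
    ecc u <> eL L u ->
    minover (mem (u |: K)) ecc <= minover predT (eL (antipode u |: L)) ->
    c \in u |: K ->
    (forall w, w \in u |: K -> ecc c <= ecc w) ->
    step (Running L K q) (Halted (ecc c) c (antipode u |: L) q.+2).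

Definition init : config := Running set0 set0 0.

Inductive reachable : config -> Prop :=
| reach_init : reachable init
| reach_step x y : reachable x -> step x y -> reachable y.

End Graph.

(* Main.v *)
Require Import Defs.
From mathcomp Require Import all_boot all_order.
From mathcomp Require Import zify.
Set Implicit Arguments. Unset Strict Implicit. Unset Printing Implicit Defensive.

Section Aux.
Variables (T : finType) (e : rel T).
Variables (disp : Order.disp_t) (R : orderType disp) (r : T -> R).

Lemma dist_le u v : dist e u v <= #|T|.
Proof.
rewrite /dist; have := find_size (fun n => v \in ball e u n) (iota 0 #|T|).
by rewrite size_iota.
Qed.

Lemma dist_ecc u v : dist e u v <= ecc e u.
Proof. exact: (leq_bigmax (F := fun v => dist e u v)). Qed.

Lemma ecc_le u : ecc e u <= #|T|.
Proof. by apply/bigmax_leqP => v _; apply: dist_le. Qed.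

Lemma eL_ecc (L : {set T}) u : eL e L u <= ecc e u.
Proof. by apply/bigmax_leqP => v _; apply: dist_ecc. Qed.

Lemma dist_eL (L : {set T}) u x : x \in L -> dist e u x <= eL e L u.
Proof. move=> xL; exact: (leq_bigmax_cond (F := fun x => dist e u x)). Qed.

Lemma minover_le (P : pred T) f i : P i -> minover P f <= f i.
Proof.
rewrite /minover => Pi.
have : i \in index_enum T by rewrite mem_index_enum.
elim: (index_enum T) => [|x s IH] //.
rewrite big_cons inE; case/orP=> [/eqP <-|iS].
  by rewrite Pi geq_minl.
case: ifP => _; last exact: IH.
exact: leq_trans (geq_minr _ _) (IH iS).
Qed.

Lemma le_minover (P : pred T) f m : m <= #|T| -> (forall i, P i -> m <= f i) ->
  m <= minover P f.
Proof.
move=> hT hf; rewrite /minover; apply: (big_ind (fun x => m <= x)) => //.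
by move=> x y hx hy; rewrite leq_min hx hy.
Qed.

Lemma minover_mono (f g : T -> nat) : (forall i, g i <= f i) ->
  minover predT g <= minover predT f.
Proof.
move=> h; rewrite /minover; apply: (big_ind2 (fun x y => x <= y)) => //.
move=> x1 x2 y1 y2 h1 h2; rewrite leq_min; apply/andP; split.
  exact: leq_trans (geq_minl _ _) h1.
exact: leq_trans (geq_minr _ _) h2.
Qed.

Lemma antipode_far u : dist e u (antipode e r u) = ecc e u.
Proof.
rewrite /antipode; case: pickP => [a /forallP Ha|Hn] /=.
  apply/eqP; rewrite eqn_leq dist_ecc /=.
  apply/bigmax_leqP => v _; case/orP: (Ha v) => [/ltnW //|/andP[/eqP -> _]] //.
exfalso.
have hT : 0 < #|T| by apply/card_gt0P; exists u.
have [v Hv] := eq_bigmax (fun v => dist e u v) hT.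
pose S := [pred w | dist e u w == ecc e u].
have Sv : S v by rewrite /S /= /ecc Hv.
case: (Order.TotalTheory.arg_maxP r Sv) => a Sa Hmax.
have := Hn a; move/negbT/negP; apply; apply/forallP => w.
move: Sa; rewrite /S /= => /eqP ->.
have := dist_ecc u w; rewrite leq_eqVlt => /orP[/eqP dw|->//].
apply/orP; right; rewrite dw eqxx /=; apply: Hmax; by rewrite /S /= dw.
Qed.

Lemma antipode_notin (L : {set T}) u : ecc e u <> eL e L u -> antipode e r u \notin L.
Proof.
move=> ne; apply/negP => aL; apply: ne; apply/eqP; rewrite eqn_leq eL_ecc andbT.
by rewrite -{1}(antipode_far u) dist_eL.
Qed.

End Aux.

Section Main.
Variables (T : finType) (e : rel T).
Variables (disp : Order.disp_t) (R : orderType disp) (r : T -> R).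

Definition prog (x y : config T) : Prop :=
  match x, y with
  | Running L _ _, Running L' _ _ => #|L| < #|L'|
  | Running _ _ _, Halted _ _ _ _ => True
  | Halted _ _ _ _, _ => False
  end.

Lemma step_prog x y : step e r x y -> prog x y.
Proof.
case=> //= L K q u _ ne _.
by rewrite cardsU1 (antipode_notin r ne).
Qed.

Lemma acc_halt v c L q : Acc (fun y x => step e r x y) (Halted v c L q).
Proof. by constructor => y /step_prog. Qed.

Lemma acc_run n (L K : {set T}) q : #|T| - #|L| <= n ->
  Acc (fun y x => step e r x y) (Running L K q).
Proof.
elim: n L K q => [|n IH] L K q hn; constructor => y /step_prog;
  (case: y => [L' K' q'|v c L' q'] /= hlt; last exact: acc_halt);
  have := max_card (mem L'); move: hlt hn; rewrite -/#|L'|.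
- by move: #|L| #|L'| #|T| => a b t; lia.
- by move=> hlt hn hc; apply: IH; move: #|L| #|L'| #|T| hlt hn hc => a b t; lia.
Qed.

Definition Inv (x : config T) : Prop :=
  match x with
  | Running L K q => q = 2 * #|L| /\ L \subset antipodes_all e r
  | Halted val c L q => [/\ val = rad e, ecc e c = rad e, radius_certificate e L,
            L \subset antipodes_all e r & q <= 2 * #|L| + 1]
  end.

Lemma rad_le c : rad e <= ecc e c.
Proof. exact: minover_le. Qed.

Lemma inv_step x y : Inv x -> step e r x y -> Inv y.
Proof.
move=> hx st; case: st hx => /=.
- move=> L K q u hmin heq [-> hsub].
  have hr : ecc e u = rad e.
    apply/eqP; rewrite eqn_leq rad_le andbT; apply: le_minover; first exact: ecc_le.
    by move=> i _; rewrite heq; apply: leq_trans (hmin i) (eL_ecc _ _ _).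
  split => //; last by rewrite addn1.
  by move=> v; rewrite -hr heq.
- move=> L K q u _ ne _ [-> hsub]; split.
    by rewrite cardsU1 (antipode_notin r ne); move: #|L| => n; lia.
  by rewrite subUset hsub andbT sub1set; apply/imsetP; exists u.
- move=> L K q u c _ ne hchk cin cmin [-> hsub].
  have h1 : ecc e c <= minover (mem (u |: K)) (ecc e).
    by apply: le_minover; [exact: ecc_le | exact: cmin].
  have h2 : minover predT (eL e (antipode e r u |: L)) <= rad e.
    by apply: minover_mono => i; apply: eL_ecc.
  have hr : ecc e c = rad e.
    by apply/eqP; rewrite eqn_leq rad_le andbT; apply: leq_trans h1 (leq_trans hchk h2).
  split => //.
  - move=> v; rewrite -hr; apply: leq_trans h1 (leq_trans hchk _).
    exact: minover_le.
  - by rewrite subUset hsub andbT sub1set; apply/imsetP; exists u.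
  - by rewrite cardsU1 (antipode_notin r ne); move: #|L| => n; lia.
Qed.

Lemma inv_reach x : reachable e r x -> Inv x.
Proof.
elim => [|x0 y _ IH st]; last exact: inv_step IH st.
by rewrite /= cards0 sub0set.
Qed.

End Main.

Theorem theorem3 (T : finType) (e : rel T)
  (e_sym : symmetric e) (e_irr : irreflexive e)
  (T_nonempty : 0 < #|T|)
  (connected : forall u v : T, connect e u v)
  (disp : Order.disp_t) (R : orderType disp) (r : T -> R) (r_inj : injective r) :
  (* termination: no infinite run *)
  Acc (fun y x => step e r x y) (init T)
  (* progress: a non-halted reachable configuration can always move *)
  /\ (forall L K q, reachable e r (Running L K q) -> exists y, step e r (Running L K q) y)
  (* correctness and query bound of every output *)
  /\ (forall val c L q, reachable e r (Halted val c L q) ->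
        [/\ val = rad e, ecc e c = rad e, radius_certificate e L,
            L \subset antipodes_all e r
          & q <= 2 * #|L| + 1 /\ q <= 2 * #|antipodes_all e r| + 1]).
Proof.
split; first exact: (acc_run _ _ _ _ (leq_subr _ _)).
split.
  move=> L K q _.
  have /card_gt0P [i0 _] := T_nonempty.
  case: (@arg_minnP _ i0 predT (eL e L)) => // u _ hmin.
  have hmin' : forall v, eL e L u <= eL e L v by move=> v; exact: hmin.
  case: (eqVneq (ecc e u) (eL e L u)) => [heq|/eqP ne].
    by exists (Halted (ecc e u) u L q.+1); apply: step_halt3.
  case: (leqP (minover (mem (u |: K)) (ecc e))
              (minover predT (eL e (antipode e r u |: L)))) => hchk.
    have uin : u \in u |: K by rewrite setU11.
    case: (@arg_minnP _ u (mem (u |: K)) (ecc e)) => // c cin cmin.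
    by eexists; apply: step_halt_check; eauto.
  by eexists; apply: step_continue => //; rewrite leqNgt hchk.
move=> val c L q /inv_reach [h1 h2 h3 h4 h5]; split => //; split => //.
apply: leq_trans h5 _; rewrite leq_add2r leq_mul2l; apply/orP; right.
exact: subset_leq_card.
Qed.
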